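(* Let $\mathbf k$ be an algebraically closed field of characteristic zero, $n\geq 1$, $\zeta\in\mathbf k$ an $n$-th root of unity, and let $F:\mathcal D_{\zeta,n}\to\langle\delta_1\rangle$ be the functor defined below. Then for every $k\in\mathbb N$ the induced map $\mathrm{Hom}_{\mathcal D_{\zeta,n}}(k,0)\to\mathrm{Hom}_{\mathrm{Vec}_{\mathbb Z_n}^{\zeta}}(\delta_1^{\otimes k},\mathbf 1)$ is injective.
   Context: $\mathrm{Vec}_{\mathbb Z_n}^{\zeta}$ is the fusion category of finite-dimensional $\mathbb Z_n$-graded $\mathbf k$-vector spaces with graded tensor product, unit $\mathbf 1=\delta_0$, unit isomorphisms identities, and associativity on $(\delta_a\otimes\delta_b)\otimes\delta_c$ given by multiplication by $\zeta^{\,a(b+c-\overline{b+c})/n}$ ($a,b,c\in\{0,\dots,n-1\}$, $\overline{m}$ the remainder of $m$ mod $n$); $\delta_a$ is the simple object concentrated in degree $a$. $\langle\delta_1\rangle$ is the full monoidal subcategory of $\mathrm{Vec}_{\mathbb Z_n}^{\zeta}$ with objects $\delta_1^{\otimes k}$, $k\in\mathbb N$. $\mathcal D_{\zeta,n}$ is the strict $\mathbf k$-linear monoidal category with objects $k\in\mathbb N$, $k\otimes l=k+l$, unit $0$, whose morphisms are generated under composition, tensor product and linear combinations by $\mathrm{id}_1$, $f_n:n\to 0$ and $g_n:0\to n$, subject to $f_n\circ g_n=\mathrm{id}_0$, $g_n\circ f_n=\mathrm{id}_n$, and $\mathrm{id}_1\otimes f_n=\zeta\,(f_n\otimes\mathrm{id}_1)$.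 The $\mathbf k$-linear monoidal functor $F$ is defined by $F(1)=\delta_1$, $F(f_n)=\lambda$ the canonical isomorphism $\delta_1^{\otimes n}\xrightarrow{\sim}\mathbf 1$, and $F(g_n)=\lambda^{-1}$. *)

(* Defs.v *)
From HB Require Import structures.
From mathcomp Require Import all_boot all_order all_algebra.
Set Implicit Arguments. Unset Strict Implicit. Unset Printing Implicit Defensive.
Import GRing.Theory.
Local Open Scope ring_scope.

(** Morphisms are raw expressions built from identities, the generators
    f_n : n -> 0 and g_n : 0 -> n, composition, tensor product and
    k-linear combinations, modulo the smallest congruence containing the
    axioms of a strict k-linear monoidal category and the three defining
    relations. *)

Section D.
Variable K : fieldType.

Inductive tm : Type :=
| Id of nat                 (* identity of the object k (id_1^{(x)k}) *)
| Fg
| Gg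
| Comp of tm & tm           (* Comp s t = s \o t *)
| Tens of tm & tm
| Zero of nat & nat
| Add of tm & tm
| Scale of K & tm.

Inductive Typ (n : nat) : tm -> nat -> nat -> Prop :=
| TId k : Typ n (Id k) k k
| TF : Typ n Fg n 0
| TG : Typ n Gg 0 n
| TComp s t a b c : Typ n t a b -> Typ n s b c -> Typ n (Comp s t) a c
| TTens s t a b c d : Typ n s a b -> Typ n t c d ->
    Typ n (Tens s t) (a + c)%N (b + d)%N
| TZero a b : Typ n (Zero a b) a b
| TAdd s t a b : Typ n s a b -> Typ n t a b -> Typ n (Add s t) a b
| TScale c t a b : Typ n t a b -> Typ n (Scale c t) a b.

Inductive Eqv (n : nat) (zeta : K) : tm -> tm -> Prop :=
| Erefl t : Eqv n zeta t t
| Esym s t : Eqv n zeta s t -> Eqv n zeta t s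
| Etrans s t u : Eqv n zeta s t -> Eqv n zeta t u -> Eqv n zeta s u
| EComp s s' t t' : Eqv n zeta s s' -> Eqv n zeta t t' ->
    Eqv n zeta (Comp s t) (Comp s' t')
| ETens s s' t t' : Eqv n zeta s s' -> Eqv n zeta t t' ->
    Eqv n zeta (Tens s t) (Tens s' t')
| EAdd s s' t t' : Eqv n zeta s s' -> Eqv n zeta t t' ->
    Eqv n zeta (Add s t) (Add s' t')
| EScale c t t' : Eqv n zeta t t' -> Eqv n zeta (Scale c t) (Scale c t')
| Eidl t a b : Typ n t a b -> Eqv n zeta (Comp (Id b) t) t
| Eidr t a b : Typ n t a b -> Eqv n zeta (Comp t (Id a)) t
| Eassoc u s t a b c d : Typ n t a b -> Typ n s b c -> Typ n u c d ->
    Eqv n zeta (Comp (Comp u s) t) (Comp u (Comp s t))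
| Etassoc s t u a b c d e f : Typ n s a b -> Typ n t c d -> Typ n u e f ->
    Eqv n zeta (Tens (Tens s t) u) (Tens s (Tens t u))
| Etunitl t a b : Typ n t a b -> Eqv n zeta (Tens (Id 0) t) t
| Etunitr t a b : Typ n t a b -> Eqv n zeta (Tens t (Id 0)) t
| Etid a b : Eqv n zeta (Tens (Id a) (Id b)) (Id (a + b))
| Einterchange s s' t t' a b c d e f :
    Typ n s a b -> Typ n s' b c -> Typ n t d e -> Typ n t' e f ->
    Eqv n zeta (Comp (Tens s' t') (Tens s t)) (Tens (Comp s' s) (Comp t' t))
| Eaddc s t a b : Typ n s a b -> Typ n t a b -> Eqv n zeta (Add s t) (Add t s)
| Eadda s t u a b : Typ n s a b -> Typ n t a b -> Typ n u a b ->
    Eqv n zeta (Add (Add s t) u) (Add s (Add t u))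
| Eadd0 t a b : Typ n t a b -> Eqv n zeta (Add t (Zero a b)) t
| EaddN t a b : Typ n t a b ->
    Eqv n zeta (Add t (Scale (-1) t)) (Zero a b)
| Escale1 t a b : Typ n t a b -> Eqv n zeta (Scale 1 t) t
| EscaleM c d t a b : Typ n t a b ->
    Eqv n zeta (Scale c (Scale d t)) (Scale (c * d) t)
| EscaleDl c d t a b : Typ n t a b ->
    Eqv n zeta (Scale (c + d) t) (Add (Scale c t) (Scale d t))
| EscaleDr c s t a b : Typ n s a b -> Typ n t a b ->
    Eqv n zeta (Scale c (Add s t)) (Add (Scale c s) (Scale c t))
| ECompDl s s' t a b c : Typ n t a b -> Typ n s b c -> Typ n s' b c ->
    Eqv n zeta (Comp (Add s s') t) (Add (Comp s t) (Comp s' t))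
| ECompDr s t t' a b c : Typ n t a b -> Typ n t' a b -> Typ n s b c ->
    Eqv n zeta (Comp s (Add t t')) (Add (Comp s t) (Comp s t'))
| ECompZl x s t a b c : Typ n t a b -> Typ n s b c ->
    Eqv n zeta (Comp (Scale x s) t) (Scale x (Comp s t))
| ECompZr x s t a b c : Typ n t a b -> Typ n s b c ->
    Eqv n zeta (Comp s (Scale x t)) (Scale x (Comp s t))
| ETensDl s s' t a b c d : Typ n s a b -> Typ n s' a b -> Typ n t c d ->
    Eqv n zeta (Tens (Add s s') t) (Add (Tens s t) (Tens s' t))
| ETensDr s t t' a b c d : Typ n s a b -> Typ n t c d -> Typ n t' c d ->
    Eqv n zeta (Tens s (Add t t')) (Add (Tens s t) (Tens s t'))
| ETensZl x s t a b c d : Typ n s a b -> Typ n t c d ->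
    Eqv n zeta (Tens (Scale x s) t) (Scale x (Tens s t))
| ETensZr x s t a b c d : Typ n s a b -> Typ n t c d ->
    Eqv n zeta (Tens s (Scale x t)) (Scale x (Tens s t))
| Efg : Eqv n zeta (Comp Fg Gg) (Id 0)
| Egf : Eqv n zeta (Comp Gg Fg) (Id n)
| Ezeta : Eqv n zeta (Tens (Id 1) Fg) (Scale zeta (Tens Fg (Id 1))).

(** source / target of a raw term (meaningful on well-typed terms) *)
Fixpoint src (n : nat) (t : tm) : nat :=
  match t with
  | Id k => k | Fg => n | Gg => 0
  | Comp _ t => src n t
  | Tens s t => (src n s + src n t)%N
  | Zero a _ => a | Add s _ => src n s | Scale _ t => src n t
  end.
Fixpoint tgt (n : nat) (t : tm) : nat :=
  match t with
  | Id k => k | Fg => 0 | Gg => n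
  | Comp s _ => tgt n s
  | Tens s t => (tgt n s + tgt n t)%N
  | Zero _ b => b | Add s _ => tgt n s | Scale _ t => tgt n t
  end.

(** * The target: <delta_1> inside Vec_{Z_n}^zeta, skeletally.
    delta_1^{(x)k} (left-nested bracketing, delta_1^{(x)0} = 1) is the
    one-dimensional space concentrated in degree k mod n, whose basis vector
    is the tensor of the basis vectors of delta_1; a morphism
    delta_1^{(x)k} -> delta_1^{(x)l} (k = l mod n) is thus a scalar.
    The associator on (d_a (x) d_b) (x) d_c is omega a b c, and the monoidal
    structure J k l : F(k) (x) F(l) -> F(k+l) of F is the composite of
    inverse associators re-bracketing to the left:
      J k 0 = 1,  J k (l+1) = J k l * (omega (k%%n) (l%%n) 1)^-1. *)
Definition omega (n : nat) (zeta : K) (a b c : nat) : K :=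
  zeta ^+ (a * ((b + c - (b + c) %% n) %/ n)).

Fixpoint Jstr (n : nat) (zeta : K) (k l : nat) : K :=
  match l with
  | 0 => 1
  | l'.+1 => Jstr n zeta k l' * (omega n zeta (k %% n) (l' %% n) 1)^-1
  end.

(** the functor F on raw terms: F(f_n) = lambda and F(g_n) = lambda^-1,
    lambda being the canonical isomorphism delta_1^{(x)n} = 1 (scalar 1),
    F(s (x) t) = J o (F s (x) F t) o J^-1 *)
Fixpoint Fint (n : nat) (zeta : K) (t : tm) : K :=
  match t with
  | Id _ => 1
  | Fg => 1
  | Gg => 1
  | Comp s t => Fint n zeta s * Fint n zeta t
  | Tens s t => Jstr n zeta (tgt n s) (tgt n t) * (Fint n zeta s * Fint n zeta t)
                 / Jstr n zeta (src n s) (src n t)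
  | Zero _ _ => 0
  | Add s t => Fint n zeta s + Fint n zeta t
  | Scale c t => c * Fint n zeta t
  end.

End D.

(* Main.v *)
Require Import Defs.
From mathcomp Require Import all_boot all_order all_algebra.
From mathcomp Require Import zify ring.
From Stdlib Require Import Setoid Morphisms.
Import GRing.Theory.
Local Open Scope ring_scope.
Set Implicit Arguments. Unset Strict Implicit.

Arguments Id {K} _. Arguments Fg {K}. Arguments Gg {K}. Arguments Zero {K} _ _.

Global Instance Eqv_equiv (K : fieldType) n (z : K) : Equivalence (Eqv n z).
Proof. split; [exact: Erefl| exact: Esym| exact: Etrans]. Qed.
Global Instance Comp_proper (K : fieldType) n (z : K) : Proper (Eqv n z ==> Eqv n z ==> Eqv n z) (@Comp K).
Proof. by move=> ? ? ? ? ? ?; apply: EComp. Qed.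
Global Instance Tens_proper (K : fieldType) n (z : K) : Proper (Eqv n z ==> Eqv n z ==> Eqv n z) (@Tens K).
Proof. by move=> ? ? ? ? ? ?; apply: ETens. Qed.
Global Instance Add_proper (K : fieldType) n (z : K) : Proper (Eqv n z ==> Eqv n z ==> Eqv n z) (@Add K).
Proof. by move=> ? ? ? ? ? ?; apply: EAdd. Qed.
Global Instance Scale_proper (K : fieldType) n (z : K) c : Proper (Eqv n z ==> Eqv n z) (@Scale K c).
Proof. by move=> ? ? ?; apply: EScale. Qed.

Fixpoint wtb (K : fieldType) (n : nat) (t : tm K) : bool :=
  match t with
  | Comp s t => [&& wtb n s, wtb n t & tgt n t == src n s]
  | Tens s t => wtb n s && wtb n t
  | Add s t => [&& wtb n s, wtb n t, src n s == src n t & tgt n s == tgt n t]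
  | Scale _ t => wtb n t
  | _ => true
  end.

Lemma wtbP (K : fieldType) n (t : tm K) : wtb n t -> Typ n t (src n t) (tgt n t).
Proof.
elim: t => //=; try by constructor.
- move=> s IHs t IHt /and3P[/IHs hs /IHt ht /eqP e]. rewrite e in ht. exact: TComp ht hs.
- move=> s IHs t IHt /andP[/IHs hs /IHt ht]. exact: TTens.
- move=> s IHs t IHt /and4P[/IHs hs /IHt ht /eqP e1 /eqP e2]. rewrite -e1 -e2 in ht. exact: TAdd.
- move=> c t IHt /IHt h; exact: TScale.
Qed.

Lemma TypW (K : fieldType) n (t : tm K) a b : Typ n t a b -> [/\ wtb n t, src n t = a & tgt n t = b].
Proof.
elim=> //= {t a b}.
- move=> s t a b c _ [h1 h2 h3] _ [h4 h5 h6]; by rewrite h1 h4 h3 h5 h2 h6 eqxx.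
- move=> s t a b c d _ [h1 h2 h3] _ [h4 h5 h6]; by rewrite h1 h4 h2 h3 h5 h6.
- move=> s t a b _ [h1 h2 h3] _ [h4 h5 h6]; by rewrite h1 h4 h2 h3 h5 h6 !eqxx.
Qed.

Lemma tyI (K : fieldType) n (t : tm K) a b : wtb n t -> src n t = a -> tgt n t = b -> Typ n t a b.
Proof. move=> h <- <-; exact: wtbP. Qed.


Fixpoint P (K : fieldType) (n q x : nat) : tm K :=
  match q with 0 => Id x | q'.+1 => Comp (P K n q' x) (Tens Fg (Id (q' * n + x))) end.
Fixpoint Q (K : fieldType) (n q x : nat) : tm K :=
  match q with 0 => Id x | q'.+1 => Comp (Tens Gg (Id (q' * n + x))) (Q K n q' x) end.

Lemma P_w (K : fieldType) n q x : [/\ wtb n (P K n q x), src n (P K n q x) = (q*n + x)%N & tgt n (P K n q x) = x].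
Proof. elim: q => [|q [h1 h2 h3]] //=. rewrite h1 h2 h3 /=. split=> //; lia. Qed.
Lemma Q_w (K : fieldType) n q x : [/\ wtb n (Q K n q x), src n (Q K n q x) = x & tgt n (Q K n q x) = (q*n + x)%N].
Proof. elim: q => [|q [h1 h2 h3]] //=. rewrite h1 h2 h3 /=. split=> //; lia. Qed.

Lemma test (K : fieldType) n (z : K) t a b : Typ n t a b -> Eqv n z (Comp (Comp (Id b) t) (Id a)) t.
Proof. move=> H. rewrite (Eidl z H). rewrite (Eidr z H). reflexivity. Qed.


Lemma Pwtb (K : fieldType) n q x : wtb n (P K n q x). Proof. by case: (P_w K n q x). Qed.
Lemma Psrc (K : fieldType) n q x : src n (P K n q x) = (q*n + x)%N. Proof. by case: (P_w K n q x). Qed.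
Lemma Ptgt (K : fieldType) n q x : tgt n (P K n q x) = x. Proof. by case: (P_w K n q x). Qed.
Lemma Qwtb (K : fieldType) n q x : wtb n (Q K n q x). Proof. by case: (Q_w K n q x). Qed.
Lemma Qsrc (K : fieldType) n q x : src n (Q K n q x) = x. Proof. by case: (Q_w K n q x). Qed.
Lemma Qtgt (K : fieldType) n q x : tgt n (Q K n q x) = (q*n + x)%N. Proof. by case: (Q_w K n q x). Qed.

Ltac wt := rewrite /= ?Pwtb ?Qwtb ?Psrc ?Ptgt ?Qsrc ?Qtgt /=; try done; try lia.


Global Hint Resolve Erefl : core.
Section W.
Variables (K : fieldType) (n : nat) (z : K).
Local Notation E := (Eqv n z).
Local Notation TY t := (Typ n t (src n t) (tgt n t)).

Lemma idl' (t : tm K) b : wtb n t -> tgt n t = b -> E (Comp (Id b) t) t.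
Proof. move=> h <-; exact: Eidl (wtbP h). Qed.
Lemma idr' (t : tm K) a : wtb n t -> src n t = a -> E (Comp t (Id a)) t.
Proof. move=> h <-; exact: Eidr (wtbP h). Qed.
Lemma assoc' (u s t : tm K) : wtb n u -> wtb n s -> wtb n t -> src n u = tgt n s -> src n s = tgt n t ->
  E (Comp (Comp u s) t) (Comp u (Comp s t)).
Proof.
move=> hu hs ht e1 e2. apply: (Eassoc _ (wtbP ht)). by rewrite -e2; exact: wtbP. by rewrite -e1; exact: wtbP.
Qed.
Lemma tassoc' (s t u : tm K) : wtb n s -> wtb n t -> wtb n u -> E (Tens (Tens s t) u) (Tens s (Tens t u)).
Proof. move=> h1 h2 h3; exact: Etassoc (wtbP h1) (wtbP h2) (wtbP h3). Qed.
Lemma unitl' (t : tm K) : wtb n t -> E (Tens (Id 0) t) t.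
Proof. move=> h; exact: Etunitl (wtbP h). Qed.
Lemma unitr' (t : tm K) : wtb n t -> E (Tens t (Id 0)) t.
Proof. move=> h; exact: Etunitr (wtbP h). Qed.
Lemma inter' (s s' t t' : tm K) : wtb n s -> wtb n s' -> wtb n t -> wtb n t' ->
  src n s' = tgt n s -> src n t' = tgt n t ->
  E (Comp (Tens s' t') (Tens s t)) (Tens (Comp s' s) (Comp t' t)).
Proof.
move=> h1 h2 h3 h4 e1 e2. apply: (Einterchange _ (wtbP h1) _ (wtbP h3)).
by rewrite -e1; exact: wtbP. by rewrite -e2; exact: wtbP.
Qed.
Lemma scale1' (t : tm K) : wtb n t -> E (Scale 1 t) t.
Proof. move=> h; exact: Escale1 (wtbP h). Qed.
Lemma scaleM' c d (t : tm K) : wtb n t -> E (Scale c (Scale d t)) (Scale (c * d) t).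
Proof. move=> h; exact: EscaleM (wtbP h). Qed.
Lemma compZl' x (s t : tm K) : wtb n s -> wtb n t -> src n s = tgt n t -> E (Comp (Scale x s) t) (Scale x (Comp s t)).
Proof. move=> h1 h2 e; apply: (ECompZl _ _ (wtbP h2)). rewrite -e; exact: wtbP. Qed.
Lemma compZr' x (s t : tm K) : wtb n s -> wtb n t -> src n s = tgt n t -> E (Comp s (Scale x t)) (Scale x (Comp s t)).
Proof. move=> h1 h2 e; apply: (ECompZr _ _ (wtbP h2)). rewrite -e; exact: wtbP. Qed.
Lemma tensZl' x (s t : tm K) : wtb n s -> wtb n t -> E (Tens (Scale x s) t) (Scale x (Tens s t)).
Proof. move=> h1 h2; exact: ETensZl (wtbP h1) (wtbP h2). Qed.
Lemma tensZr' x (s t : tm K) : wtb n s -> wtb n t -> E (Tens s (Scale x t)) (Scale x (Tens s t)).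
Proof. move=> h1 h2; exact: ETensZr (wtbP h1) (wtbP h2). Qed.

Lemma scale0' (u : tm K) a b : Typ n u a b -> E (Scale 0 u) (Zero a b).
Proof.
move=> h. have ->: (0 : K) = 1 + -1 by rewrite addrN.
rewrite (EscaleDl _ _ _ h) (Escale1 _ h). exact: EaddN h.
Qed.
Lemma scaleZ c a b : E (Scale c (Zero a b)) (Zero a b).
Proof.
transitivity (Scale c (Scale 0 (@Zero K a b))). by rewrite (scale0' (@TZero K n a b)).
rewrite scaleM' // mulr0. exact: scale0' (@TZero K n a b).
Qed.
Lemma compZeroL (u : tm K) a b c : Typ n u a b -> E (Comp (Zero b c) u) (Zero a c).
Proof.
move=> h. case: (TypW h) => h1 h2 h3.
transitivity (Comp (Scale 0 (@Zero K b c)) u). by rewrite (scale0' (@TZero K n b c)).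
rewrite compZl' //=; try by rewrite h3. apply: scale0'. exact: TComp h (TZero _ _ _ _).
Qed.
Lemma compZeroR (u : tm K) a b c : Typ n u b c -> E (Comp u (Zero a b)) (Zero a c).
Proof.
move=> h. case: (TypW h) => h1 h2 h3.
transitivity (Comp u (Scale 0 (@Zero K a b))). by rewrite (scale0' (@TZero K n a b)).
rewrite compZr' //=; try by rewrite h2. apply: scale0'. exact: TComp (TZero _ _ _ _) h.
Qed.
Lemma tensZeroL (u : tm K) a b c d : Typ n u c d -> E (Tens (Zero a b) u) (Zero (a + c) (b + d)).
Proof.
move=> h. case: (TypW h) => h1 h2 h3.
transitivity (Tens (Scale 0 (@Zero K a b)) u). by rewrite (scale0' (@TZero K n a b)).
rewrite tensZl' //=. apply: scale0'. exact: TTens (TZero _ _ _ _) h.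
Qed.
Lemma tensZeroR (u : tm K) a b c d : Typ n u a b -> E (Tens u (Zero c d)) (Zero (a + c) (b + d)).
Proof.
move=> h. case: (TypW h) => h1 h2 h3.
transitivity (Tens u (Scale 0 (@Zero K c d))). by rewrite (scale0' (@TZero K n c d)).
rewrite tensZr' //=. apply: scale0'. exact: TTens h (TZero _ _ _ _).
Qed.
End W.



Section W.
Variables (K : fieldType) (n : nat) (z : K).
Local Notation E := (Eqv n z).

Lemma FL m : E (Tens (Id m) Fg) (Scale (z ^+ m) (Tens Fg (Id m))).
Proof.
elim: m => [|m IH].
  by rewrite unitl' // unitr' // expr0 scale1'.
transitivity (Tens (Tens (Id 1) (Id m)) (@Fg K)). by rewrite (@Etid K n z 1 m) add1n.
rewrite tassoc' // IH tensZr' //= -tassoc' // (@Ezeta K n z) tensZl' //= tassoc' // (@Etid K n z 1 m) scaleM' //.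
by rewrite exprSr add1n.
Qed.

Lemma FTl m y : E (Tens (Id m) (Tens Fg (Id y))) (Scale (z ^+ m) (Tens Fg (Id (m + y)))).
Proof.
rewrite -tassoc' // FL tensZl' //= tassoc' // (@Etid K n z m y) //.
Qed.

Lemma FTr y d : E (Tens (Tens Fg (Id y)) (Id d)) (Tens Fg (Id (y + d))).
Proof. by rewrite tassoc' // (@Etid K n z y d). Qed.
Lemma GTr y d : E (Tens (Tens Gg (Id y)) (Id d)) (Tens Gg (Id (y + d))).
Proof. by rewrite tassoc' // (@Etid K n z y d). Qed.

Lemma GL m (hz : z != 0) : E (Tens (Id m) Gg) (Scale (z ^+ m)^-1 (Tens Gg (Id m))).
Proof.
have key: E (Tens Gg (Id m)) (Scale (z ^+ m) (Tens (Id m) Gg)).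
  transitivity (Comp (Tens (@Gg K) (Id m)) (Comp (Tens (Id m) Fg) (Tens (Id m) Gg))).
    by rewrite inter' //= (@Efg K n z) idl' // unitr' // idr' //.
  rewrite FL compZl' //=; try lia. rewrite compZr' //=; try lia. rewrite -(@assoc' K n z (Tens Gg (Id m))) //=; try lia.
  rewrite inter' //= (@Egf K n z) idl' // (@Etid K n z n m) addnC idl' //=.
by rewrite key scaleM' // mulVf ?expf_neq0 // scale1'.
Qed.
Lemma GTl m y (hz : z != 0) : E (Tens (Id m) (Tens Gg (Id y))) (Scale (z ^+ m)^-1 (Tens Gg (Id (m + y)))).
Proof.
rewrite -tassoc' // GL // tensZl' //= tassoc' // (@Etid K n z m y) //.
Qed.

Lemma PTr q x d : E (Tens (P K n q x) (Id d)) (P K n q (x + d)).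
Proof.
elim: q => [|q IH] /=. by rewrite (@Etid K n z x d).
transitivity (Tens (Comp (P K n q x) (Tens Fg (Id (q*n+x)))) (Comp (Id d) (Id d))). by rewrite idl'.
rewrite -(@inter' K n z (Tens Fg (Id (q*n+x))) (P K n q x) (Id d) (Id d)); wt.
by rewrite IH FTr addnA.
Qed.

Lemma QTr q x d : E (Tens (Q K n q x) (Id d)) (Q K n q (x + d)).
Proof.
elim: q => [|q IH] /=. by rewrite (@Etid K n z x d).
transitivity (Tens (Comp (Tens Gg (Id (q*n+x))) (Q K n q x)) (Comp (Id d) (Id d))). by rewrite idl'.
rewrite -(@inter' K n z (Q K n q x) (Tens Gg (Id (q*n+x))) (Id d) (Id d)); wt.
by rewrite IH GTr addnA.
Qed.

Lemma PTl q x m : E (Tens (Id m) (P K n q x)) (Scale (z ^+ (m * q)) (P K n q (m + x))).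
Proof.
elim: q => [|q IH] /=. by rewrite (@Etid K n z m x) muln0 expr0 scale1'.
transitivity (Tens (Comp (Id m) (Id m)) (Comp (P K n q x) (Tens Fg (Id (q*n+x))))). by rewrite idl'.
rewrite -(@inter' K n z (Id m) (Id m) (Tens Fg (Id (q*n+x))) (P K n q x)); wt.
rewrite IH FTl compZl'; wt. rewrite compZr'; wt. rewrite scaleM'; wt.
have ->: (m + (q*n+x) = q*n + (m+x))%N by lia.
by rewrite mulnS exprD mulrC.
Qed.

Lemma QTl q x m (hz : z != 0) : E (Tens (Id m) (Q K n q x)) (Scale (z ^+ (m * q))^-1 (Q K n q (m + x))).
Proof.
elim: q => [|q IH] /=. by rewrite (@Etid K n z m x) muln0 expr0 invr1 scale1'.
transitivity (Tens (Comp (Id m) (Id m)) (Comp (Tens Gg (Id (q*n+x))) (Q K n q x))). by rewrite idl'.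
rewrite -(@inter' K n z (Id m) (Id m) (Q K n q x) (Tens Gg (Id (q*n+x)))); wt.
rewrite IH GTl // compZl'; wt. rewrite compZr'; wt. rewrite scaleM'; wt.
have ->: (m + (q*n+x) = q*n + (m+x))%N by lia.
by rewrite mulnS exprD invfM.
Qed.

Lemma PQ q x : E (Comp (P K n q x) (Q K n q x)) (Id x).
Proof.
elim: q => [|q IH] /=. by rewrite idl'.
rewrite (@assoc' K n z (P K n q x)); wt. rewrite -(@assoc' K n z (Tens Fg (Id (q*n+x)))); wt.
rewrite inter'; wt. by rewrite (@Efg K n z) idl' // unitl' // idl'; wt.
Qed.

Lemma QP q x : E (Comp (Q K n q x) (P K n q x)) (Id (q * n + x)).
Proof.
elim: q => [|q IH] /=. by rewrite idl'.
rewrite (@assoc' K n z (Tens Gg (Id (q*n+x)))); wt. rewrite -(@assoc' K n z (Q K n q x)); wt.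
rewrite IH idl'; wt. rewrite inter'; wt. rewrite (@Egf K n z) idl' // (@Etid K n z).
by have ->: (n + (q * n + x) = q.+1 * n + x)%N by lia.
Qed.

Lemma PP p q x : E (Comp (P K n p x) (P K n q (p * n + x))) (P K n (q + p) x).
Proof.
elim: q => [|q IH] /=. by rewrite idr'; wt.
rewrite -(@assoc' K n z (P K n p x)); wt. rewrite IH.
by have ->: (q * n + (p * n + x) = (q + p) * n + x)%N by lia.
Qed.

Lemma QQ p q x : E (Comp (Q K n q (p * n + x)) (Q K n p x)) (Q K n (q + p) x).
Proof.
elim: q => [|q IH] /=. by rewrite idl'; wt.
rewrite (@assoc' K n z (Tens Gg (Id (q * n + (p * n + x))))); wt. rewrite IH.
by have ->: (q * n + (p * n + x) = (q + p) * n + x)%N by lia.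
Qed.
End W.



Section W.
Variables (K : fieldType) (n : nat) (z : K).
Local Notation E := (Eqv n z).

Lemma Cnorm q1 q2 e r : E (Comp (Q K n q2 (e * n + r)) (P K n q1 (e * n + r))) (Comp (Q K n (q2 + e) r) (P K n (q1 + e) r)).
Proof.
symmetry. rewrite -(PP n z e q1 r) -(QQ n z e q2 r).
rewrite (@assoc' K n z (Q K n q2 (e * n + r))); wt. rewrite -(@assoc' K n z (Q K n e r)); wt.
by rewrite QP idl'; wt.
Qed.

Lemma CT' qa qb qc qd r1 r2 (hz : z != 0) :
  E (Tens (Comp (Q K n qb r1) (P K n qa r1)) (Comp (Q K n qd r2) (P K n qc r2)))
    (Scale (z ^+ ((qa * n + r1) * qc) * (z ^+ (r1 * qd))^-1)
       (Comp (Q K n (qb + qd) (r1 + r2)) (P K n (qa + qc) (r1 + r2)))).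
Proof.
rewrite -(@inter' K n z (P K n qa r1) (Q K n qb r1) (P K n qc r2) (Q K n qd r2)); wt.
have h1 : E (Tens (P K n qa r1) (P K n qc r2)) (Scale (z ^+ ((qa * n + r1) * qc)) (P K n (qa + qc) (r1 + r2))).
  transitivity (Tens (Comp (P K n qa r1) (Id (qa * n + r1))) (Comp (Id r2) (P K n qc r2))).
    by rewrite idr' ?idl'; wt.
  rewrite -(@inter' K n z (Id (qa * n + r1)) (P K n qa r1) (P K n qc r2) (Id r2)); wt.
  rewrite PTr PTl compZr'; wt. by rewrite -(addnA _ r1 r2) PP (addnC qc qa).
have h2 : E (Tens (Q K n qb r1) (Q K n qd r2)) (Scale (z ^+ (r1 * qd))^-1 (Q K n (qb + qd) (r1 + r2))).
  transitivity (Tens (Comp (Q K n qb r1) (Id r1)) (Comp (Id (qd * n + r2)) (Q K n qd r2))).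
    by rewrite idr' ?idl'; wt.
  rewrite -(@inter' K n z (Id r1) (Q K n qb r1) (Q K n qd r2) (Id (qd * n + r2))); wt.
  rewrite QTr QTl // compZr'; wt.
  have ->: (r1 + (qd * n + r2) = qd * n + (r1 + r2))%N by lia.
  by rewrite QQ.
rewrite h1 h2 compZl'; wt. rewrite compZr'; wt. rewrite scaleM'; wt. by rewrite mulrC.
Qed.
End W.

Lemma Jclosed (K : fieldType) n (z : K) k l : (0 < n)%N ->
  Jstr n z k l = (z ^+ ((k %% n) * (l %/ n)))^-1.
Proof.
move=> hn. elim: l => [|l IH] /=. by rewrite div0n muln0 expr0 invr1.
rewrite IH /omega -invfM -exprD. congr (_ ^+ _)^-1. rewrite -mulnDr. congr (_ * _)%N.
set m := (l %% n + 1)%N.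
have hm : (m - m %% n = m %/ n * n)%N by rewrite {1}(divn_eq m n) addnK.
rewrite hm mulnK //.
have -> : l.+1 = (l %/ n * n + m)%N by rewrite /m addnA -divn_eq addn1.
by rewrite divnMDl.
Qed.

Lemma Fint0 (K : fieldType) n (z : K) (t : tm K) a b : (0 < n)%N -> Typ n t a b -> (a %% n != b %% n)%N -> Fint n z t = 0.
Proof.
move=> hn. elim=> {t a b} /=.
- by move=> k; rewrite eqxx.
- by rewrite modnn mod0n.
- by rewrite modnn mod0n.
- move=> s t a b c _ IHt _ IHs h.
  case: (eqVneq (a %% n)%N (b %% n)%N) => [e|ne]; last by rewrite IHt // mulr0.
  by rewrite IHs ?mul0r // -e.
- move=> s t a b c d _ IHs _ IHt h.
  case: (eqVneq (a %% n)%N (b %% n)%N) => [e|ne]; last by rewrite IHs // mul0r mulr0 mul0r.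
  case: (eqVneq (c %% n)%N (d %% n)%N) => [e'|ne']; last by rewrite IHt // mulr0 mulr0 mul0r.
  by move: h; rewrite -modnDm e e' modnDm eqxx.
- by [].
- move=> s t a b _ IHs _ IHt h. by rewrite IHs // IHt // addr0.
- move=> c t a b _ IHt h. by rewrite IHt // mulr0.
Qed.



Definition C (K : fieldType) (n a b : nat) : tm K :=
  if (a %% n == b %% n)%N then Comp (Q K n (b %/ n) (b %% n)) (P K n (a %/ n) (a %% n)) else Zero a b.

Lemma C_typ (K : fieldType) n a b : Typ n (C K n a b) a b.
Proof.
rewrite /C; case: ifP => e; last exact: TZero.
apply: tyI => /=; rewrite ?Pwtb ?Qwtb ?Psrc ?Ptgt ?Qsrc ?Qtgt -?divn_eq //.
Qed.
Lemma Cwtb (K : fieldType) n a b : wtb n (C K n a b). Proof. by case: (TypW (C_typ K n a b)). Qed.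
Lemma Csrc (K : fieldType) n a b : src n (C K n a b) = a. Proof. by case: (TypW (C_typ K n a b)). Qed.
Lemma Ctgt (K : fieldType) n a b : tgt n (C K n a b) = b. Proof. by case: (TypW (C_typ K n a b)). Qed.

Lemma C_qr (K : fieldType) n qa qb r : (r < n)%N -> C K n (qa * n + r) (qb * n + r) = Comp (Q K n qb r) (P K n qa r).
Proof.
move=> hr. have hn : (0 < n)%N by lia.
by rewrite /C !modnMDl modn_small // eqxx !divnMDl // divn_small // !addn0.
Qed.

Section W.
Variables (K : fieldType) (n : nat) (z : K).
Local Notation E := (Eqv n z).
Local Notation C := (C K n).

Lemma CId k : E (C k k) (Id k).
Proof. by rewrite /C eqxx QP -divn_eq. Qed.

Lemma CC a b c : (a %% n = b %% n)%N -> (b %% n = c %% n)%N -> E (Comp (C b c) (C a b)) (C a c).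
Proof.
move=> e1 e2. rewrite /C e1 e2 !eqxx.
rewrite (@assoc' K n z (Q K n (c %/ n) (c %% n))); wt. rewrite -(@assoc' K n z (P K n (b %/ n) (c %% n))); wt.
by rewrite PQ idl'; wt.
Qed.

Lemma CF : (0 < n)%N -> E Fg (C n 0).
Proof.
move=> hn. rewrite /C modnn mod0n eqxx divnn hn div0n /=.
by rewrite idl' ?idl' ?unitr'.
Qed.

Lemma CG : (0 < n)%N -> E Gg (C 0 n).
Proof.
move=> hn. rewrite /C modnn mod0n eqxx divnn hn div0n /=.
by rewrite idr' ?idr' ?unitr'.
Qed.
Lemma CT a b c d : (0 < n)%N -> z != 0 -> z ^+ n = 1 ->
  (a %% n = b %% n)%N -> (c %% n = d %% n)%N ->
  E (Tens (C a b) (C c d)) (Scale (Jstr n z b d / Jstr n z a c) (C (a + c) (b + d))).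
Proof.
move=> hn hz hzn e1 e2.
have ea : a = (a %/ n * n + a %% n)%N := divn_eq a n.
have eb : b = (b %/ n * n + a %% n)%N by rewrite e1 -divn_eq.
have ec : c = (c %/ n * n + c %% n)%N := divn_eq c n.
have ed : d = (d %/ n * n + c %% n)%N by rewrite e2 -divn_eq.
have hr1 : (a %% n < n)%N by rewrite ltn_pmod.
have hr2 : (c %% n < n)%N by rewrite ltn_pmod.
move: (a %/ n)%N (b %/ n)%N (c %/ n)%N (d %/ n)%N (a %% n)%N (c %% n)%N hr1 hr2 ea eb ec ed.
move=> qa qb qc qd r1 r2 hr1 hr2 -> -> -> -> {a b c d e1 e2}.
rewrite !C_qr // CT' //.
set e := ((r1 + r2) %/ n)%N. set r := ((r1 + r2) %% n)%N.
have er : (r1 + r2 = e * n + r)%N by rewrite /e /r -divn_eq.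
have hr : (r < n)%N by rewrite /r ltn_pmod.
have -> : (qa * n + r1 + (qc * n + r2) = (qa + qc + e) * n + r)%N by lia.
have -> : (qb * n + r1 + (qd * n + r2) = (qb + qd + e) * n + r)%N by lia.
rewrite C_qr // er Cnorm.
rewrite !Jclosed // !modnMDl !modn_small // !divnMDl // !divn_small // !addn0.
have -> : z ^+ ((qa * n + r1) * qc) = z ^+ (r1 * qc).
  by rewrite mulnDl exprD -mulnA mulnCA exprM hzn expr1n mul1r.
by rewrite invrK mulrC.
Qed.
End W.

Lemma C_ne (K : fieldType) n a b : (a %% n != b %% n)%N -> C K n a b = Zero a b.
Proof. by move=> h; rewrite /C (negbTE h). Qed.

Lemma scale_eqE (K : fieldType) n (z : K) c d (t : tm K) : c = d -> Eqv n z (Scale c t) (Scale d t).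
Proof. by move->. Qed.

Ltac cw := rewrite /= ?Cwtb ?Csrc ?Ctgt ?eqxx //.

Lemma Norm (K : fieldType) n (z : K) (hn : (0 < n)%N) (hz : z != 0) (hzn : z ^+ n = 1)
  (t : tm K) a b : Typ n t a b -> Eqv n z t (Scale (Fint n z t) (C K n a b)).
Proof.
elim=> {t a b}.
- move=> k /=. by rewrite CId scale1'.
- by rewrite /= -(CF z hn) scale1'.
- by rewrite /= -(CG z hn) scale1'.
- move=> s t a b c Ht IHt Hs IHs /=.
  apply: Etrans (EComp IHs IHt) _.
  rewrite compZl'; cw. rewrite compZr'; cw. rewrite scaleM'; cw.
  case: (eqVneq (a %% n)%N (b %% n)%N) => e1; case: (eqVneq (b %% n)%N (c %% n)%N) => e2.
  + by rewrite CC.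
  + rewrite (Fint0 z hn Hs e2) mul0r (scale0' z (C_typ K n a c)).
    exact: scale0' (TComp (C_typ K n a b) (C_typ K n b c)).
  + rewrite (Fint0 z hn Ht e1) mulr0 (scale0' z (C_typ K n a c)).
    exact: scale0' (TComp (C_typ K n a b) (C_typ K n b c)).
  + rewrite (Fint0 z hn Ht e1) mulr0 (scale0' z (C_typ K n a c)).
    exact: scale0' (TComp (C_typ K n a b) (C_typ K n b c)).
- move=> s t a b c d Hs IHs Ht IHt.
  case: (TypW Hs) => _ hs1 hs2. case: (TypW Ht) => _ ht1 ht2.
  rewrite [Fint _ _ (Tens _ _)]/= hs1 hs2 ht1 ht2.
  apply: Etrans (ETens IHs IHt) _.
  rewrite tensZl'; cw. rewrite tensZr'; cw. rewrite scaleM'; cw.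
  case: (eqVneq (a %% n)%N (b %% n)%N) => e1; case: (eqVneq (c %% n)%N (d %% n)%N) => e2.
  + rewrite CT // scaleM'; cw. apply: scale_eqE. by rewrite mulrA [_ * Fint _ _ _ * _]mulrC !mulrA.
  + rewrite (Fint0 z hn Ht e2) ?mul0r ?mulr0 ?mul0r ?mulr0 ?mul0r (scale0' z (C_typ K n (a + c) (b + d))).
    exact: scale0' (TTens (C_typ K n a b) (C_typ K n c d)).
  + rewrite (Fint0 z hn Hs e1) ?mul0r ?mulr0 ?mul0r ?mulr0 ?mul0r (scale0' z (C_typ K n (a + c) (b + d))).
    exact: scale0' (TTens (C_typ K n a b) (C_typ K n c d)).
  + rewrite (Fint0 z hn Hs e1) ?mul0r ?mulr0 ?mul0r ?mulr0 ?mul0r (scale0' z (C_typ K n (a + c) (b + d))).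
    exact: scale0' (TTens (C_typ K n a b) (C_typ K n c d)).
- move=> a b /=. by rewrite (scale0' z (C_typ K n a b)).
- move=> s t a b Hs IHs Ht IHt /=.
  apply: Etrans (EAdd IHs IHt) _. symmetry. exact: EscaleDl (C_typ K n a b).
- move=> c t a b Ht IHt /=.
  apply: Etrans (EScale c IHt) _. rewrite scaleM'; cw.
Qed.

Unset Implicit Arguments.

Theorem mainTheorem13 (K : closedFieldType) (hchar : [pchar K] =i pred0)
  (n : nat) (hn : (1 <= n)%N) (zeta : K) (hzeta : zeta ^+ n = 1)
  (k : nat) (s t : tm K) :
  Typ n s k 0 -> Typ n t k 0 ->
  Fint n zeta s = Fint n zeta t -> Eqv n zeta s t.
Proof.
move=> Hs Ht e.
have hz : zeta != 0.
  apply/eqP => z0. move: hzeta. rewrite z0 expr0n.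
  have /negbTE -> : (n != 0)%N by rewrite -lt0n.
  by move/eqP; rewrite eq_sym oner_eq0.
apply: Etrans (Norm hn hz hzeta Hs) _. rewrite e. symmetry. have h := Norm hn hz hzeta Ht. exact h.
Qed.
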